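(* Let $n\in\mathbb{N}$ and $1\le K\le 2^n$. Let $\varphi$ be a uniformly random permutation of $\{0,1\}^{2n}$ among those having exactly $K$ zero pairs. Any quantum algorithm that makes $T$ queries to $\varphi$ and $\varphi^{-1}$ and outputs a zero pair of $\varphi$ with probability $\epsilon>0$ satisfies $$\epsilon\le\frac{8(T+1)^2K}{2^n}.$$
   Context: A zero pair of a permutation $\varphi$ of $\{0,1\}^{2n}$ is a pair $(x,y)\in\{0,1\}^n\times\{0,1\}^n$ with $\varphi(x\|0^n)=y\|0^n$. Queries are to the unitaries $O_\varphi:|a\rangle|b\rangle\mapsto|a\rangle|b\oplus\varphi(a)\rangle$ and $O_{\varphi^{-1}}:|a\rangle|b\rangle\mapsto|a\rangle|b\oplus\varphi^{-1}(a)\rangle$; the success probability is over $\varphi$ and the algorithm's internal randomness and measurements. *)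

(* Defs.v *)
From HB Require Import structures.
From mathcomp Require Import all_boot all_order all_fingroup all_algebra.
From mathcomp Require Import spectral.
Set Implicit Arguments. Unset Strict Implicit. Unset Printing Implicit Defensive.
Import Order.TTheory GRing.Theory Num.Theory.
Local Open Scope ring_scope.

Definition bits (k : nat) := (k.-tuple bool).

Definition bxor k (a b : bits k) : bits k := [tuple tnth a i (+) tnth b i | i < k].

Definition pad0 n (x : bits n) : bits (n + n) := [tuple of x ++ nseq n false].

Definition zeros k : bits k := [tuple of nseq k false].

Definition perm2n n := {perm bits (n + n)}.

Definition is_zero_pair n (phi : perm2n n) (xy : bits n * bits n) : bool :=
  phi (pad0 xy.1) == pad0 xy.2.

Definition zero_pairs n (phi : perm2n n) : {set bits n * bits n} :=
  [set xy | is_zero_pair phi xy].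

(* computational basis of the algorithm's register:
   (control bit c, query input a, query output b, workspace w).
   A query with c = false applies O_phi, with c = true applies O_{phi^-1}. *)
Definition basis n m := (bool * bits (n + n) * bits (n + n) * 'I_m.+1)%type.

Definition qdim n m := #|{: basis n m}|.

Definition oracle_map n m (phi : perm2n n) (s : basis n m) : basis n m :=
  let: (c, a, b, w) := s in
  (c, a, bxor b (if c then (phi^-1)%g a else phi a), w).

Definition oracle (C : numClosedFieldType) n m (phi : perm2n n) : 'M[C]_(qdim n m) :=
  \matrix_(i, j) ((enum_val i == oracle_map phi (enum_val j))%:R).

Definition init_state (C : numClosedFieldType) n m : 'cV[C]_(qdim n m) :=
  \col_i ((enum_val i == (false, zeros (n + n), zeros (n + n), ord0))%:R).

Fixpoint run (C : numClosedFieldType) n m (U : nat -> 'M[C]_(qdim n m))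
    (phi : perm2n n) (k : nat) : 'cV[C]_(qdim n m) :=
  match k with
  | 0 => U 0%N *m init_state C n m
  | k'.+1 => U k *m (oracle C m phi *m run U phi k')
  end.

Definition success_prob (C : numClosedFieldType) n m (U : nat -> 'M[C]_(qdim n m))
    (out : basis n m -> bits n * bits n) (T : nat) (phi : perm2n n) : C :=
  \sum_(i | is_zero_pair phi (out (enum_val i))) `|run U phi T i 0| ^+ 2.

Definition perms_K n K : {set perm2n n} := [set phi | #|zero_pairs phi| == K].

Definition avg_success (C : numClosedFieldType) n m (U : nat -> 'M[C]_(qdim n m))
    (out : basis n m -> bits n * bits n) (T K : nat) : C :=
  (\sum_(phi in perms_K n K) success_prob U out T phi) / (#|perms_K n K|)%:R.

(* Main.v *)
Require Import Defs.
From HB Require Import structures.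
From mathcomp Require Import all_boot all_order all_fingroup all_algebra.
From mathcomp Require Import spectral.
From mathcomp Require Import ring zify.
Set Implicit Arguments. Unset Strict Implicit. Unset Printing Implicit Defensive.
Import Order.TTheory GRing.Theory Num.Theory.
Local Open Scope ring_scope.
Local Open Scope sesquilinear_scope.

Section LA.
Variable C : numClosedFieldType.

Lemma bxorK k (b u : bits k) : bxor (bxor b u) u = b.
Proof. apply: eq_from_tnth => i; by rewrite !tnth_mktuple addbK. Qed.

Lemma bxor_inj k (b u v : bits k) : bxor b u = bxor b v -> u = v.
Proof.
move=> h; apply: eq_from_tnth => i.
have := congr1 (fun t => tnth t i) h; rewrite !tnth_mktuple.
by move/(congr1 (addb (tnth b i))); rewrite !addKb.
Qed.

Lemma oracle_mapK n m (phi : perm2n n) : involutive (@oracle_map n m phi).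
Proof. by case=> [[[c a] b] w] /=; rewrite bxorK. Qed.

Definition nrm2 (Q : nat) (v : 'cV[C]_Q) : C := \sum_i `|v i 0| ^+ 2.

Lemma nrm2_ge0 Q (v : 'cV[C]_Q) : 0 <= nrm2 v.
Proof. by apply: sumr_ge0 => i _; rewrite exprn_ge0. Qed.

Lemma oracleE n m (phi : perm2n n) (v : 'cV[C]_(qdim n m)) i :
  (oracle C m phi *m v) i 0 = v (enum_rank (oracle_map phi (enum_val i))) 0.
Proof.
rewrite mxE (bigD1 (enum_rank (oracle_map phi (enum_val i)))) //= big1.
  by rewrite mxE enum_rankK oracle_mapK eqxx mul1r addr0.
move=> j hj; rewrite mxE; case: eqP => [e|]; last by rewrite mul0r.
by move: hj; rewrite e oracle_mapK enum_valK eqxx.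
Qed.

Lemma nrm2_oracle n m (phi : perm2n n) (v : 'cV[C]_(qdim n m)) :
  nrm2 (oracle C m phi *m v) = nrm2 v.
Proof.
rewrite /nrm2; under eq_bigr => i _ do rewrite oracleE.
pose h (i : 'I_(qdim n m)) : 'I_(qdim n m) := enum_rank (oracle_map phi (enum_val i)).
have hK : involutive h by move=> i; rewrite /h enum_rankK oracle_mapK enum_valK.
rewrite (reindex_inj (can_inj hK)) /=; apply: eq_bigr => i _.
by rewrite /h enum_rankK oracle_mapK enum_valK.
Qed.

Lemma nrm2_dot Q (v : 'cV[C]_Q) : nrm2 v = (v^t* *m v) 0 0.
Proof.
rewrite /nrm2 mxE; apply: eq_bigr => i _.
by rewrite !mxE normCK mulrC.
Qed.

Lemma nrm2_unitary Q (U : 'M[C]_Q) (v : 'cV[C]_Q) :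
  U \is unitarymx -> nrm2 (U *m v) = nrm2 v.
Proof.
move=> hU; rewrite !nrm2_dot.
have hU' : U^t* *m U = 1%:M.
  by have := trmxC_unitary U; rewrite hU => /unitarymxP; rewrite trmxCK.
rewrite trmx_mul map_mxM mulmxA -(mulmxA _ _ U).
by rewrite hU' mulmx1.
Qed.

Lemma pt_ineq (k : nat) (x y : C) :
  k%:R * `|x + y| ^+ 2 <= (k.+1)%:R * `|x| ^+ 2 + (k * k.+1)%:R * `|y| ^+ 2.
Proof.
have e : (k.+1)%:R * `|x| ^+ 2 + (k * k.+1)%:R * `|y| ^+ 2 =
    k%:R * `|x + y| ^+ 2 + `|x - k%:R * y| ^+ 2.
  rewrite !normCK !(rmorphD, rmorphN, rmorphM, conjC_nat, natrM) /=.
  rewrite -addn1 natrD. ring.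
by rewrite e lerDl exprn_ge0.
Qed.

Lemma pt_ineq1 (x y : C) : `|x + y| ^+ 2 <= 2%:R * `|x| ^+ 2 + 2%:R * `|y| ^+ 2.
Proof. by have := pt_ineq 1 x y; rewrite mul1r mul1n. Qed.

Lemma nrm2_add_ineq Q (k : nat) (v w : 'cV[C]_Q) :
  k%:R * nrm2 (v + w) <= (k.+1)%:R * nrm2 v + (k * k.+1)%:R * nrm2 w.
Proof.
rewrite /nrm2 !mulr_sumr -big_split /=; apply: ler_sum => i _.
by rewrite !mxE pt_ineq.
Qed.

Lemma nrm2_init n m : nrm2 (init_state C n m) = 1.
Proof.
rewrite /nrm2 (bigD1 (enum_rank (false, zeros (n + n), zeros (n + n), ord0))) //=.
rewrite big1 ?addr0; first by rewrite mxE enum_rankK eqxx normr1 expr1n.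
move=> i hi; rewrite mxE; case: eqP => [e|]; last by rewrite normr0 expr0n.
by move: hi; rewrite -e enum_valK eqxx.
Qed.

Lemma nrm2_run n m (U : nat -> 'M[C]_(qdim n m)) T phi k :
  (forall k, (k <= T)%N -> U k \is unitarymx) -> (k <= T)%N ->
  nrm2 (run U phi k) = 1.
Proof.
move=> hU; elim: k => [|k IH] hk /=.
  by rewrite nrm2_unitary ?hU // nrm2_init.
by rewrite nrm2_unitary ?hU // nrm2_oracle IH // ltnW.
Qed.

Lemma nrm2_0 Q : nrm2 (0 : 'cV[C]_Q) = 0.
Proof. by rewrite /nrm2 big1 // => i _; rewrite mxE normr0 expr0n. Qed.

Lemma hybrid n m (U : nat -> 'M[C]_(qdim n m)) T (phi rho : perm2n n) k :
  (forall k, (k <= T)%N -> U k \is unitarymx) -> (k <= T)%N ->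
  nrm2 (run U phi k - run U rho k) <=
  k%:R * \sum_(t < k) nrm2 ((oracle C m phi - oracle C m rho) *m run U rho t).
Proof.
move=> hU; elim: k => [|k IH] hk /=.
  by rewrite subrr nrm2_0 mul0r.
rewrite (_ : U k.+1 *m (oracle C m phi *m run U phi k) -
         U k.+1 *m (oracle C m rho *m run U rho k) =
         U k.+1 *m (oracle C m phi *m (run U phi k - run U rho k) +
           (oracle C m phi - oracle C m rho) *m run U rho k)); last first.
  by rewrite mulmxBl (mulmxBr (oracle C m phi)) addrA subrK mulmxBr.
rewrite nrm2_unitary ?hU // big_ord_recr /=.
have IH' := IH (ltnW hk).
case: (posnP k) => [k0|kpos].
  by subst k; rewrite subrr mulmx0 add0r big_ord0 add0r mul1r.
have kpos' : (0 : C) < k%:R by rewrite ltr0n.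
rewrite -(ler_pM2l kpos'); apply: le_trans (nrm2_add_ineq _ _ _) _.
rewrite nrm2_oracle.
apply: le_trans (lerD (ler_wpM2l (ler0n _ _) IH') (lexx _)) _.
rewrite !natrM !mulrDr !mulrA; apply: lerD; last by rewrite mulrC.
by rewrite [k.+1%:R * _]mulrC.
Qed.

Definition Dq n m (phi rho : perm2n n) (s : basis n m) : bool :=
  let: (c, a, _, _) := s in
  if c then (phi^-1)%g a != (rho^-1)%g a else phi a != rho a.

Lemma Dq_map n m (phi rho psi : perm2n n) (s : basis n m) :
  Dq phi rho (oracle_map psi s) = Dq phi rho s.
Proof. by case: s => [[[c a] b] w]. Qed.

Lemma Dq_eq n m (phi rho : perm2n n) (s : basis n m) :
  ~~ Dq phi rho s -> oracle_map phi s = oracle_map rho s.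
Proof. by case: s => [[[[] a] b] w] /= /negPn /eqP ->. Qed.

Lemma mxBE p q (A B : 'M[C]_(p, q)) i j : (A - B) i j = A i j - B i j.
Proof. by rewrite !mxE. Qed.

Lemma nrm2_diff n m (phi rho : perm2n n) (v : 'cV[C]_(qdim n m)) :
  nrm2 ((oracle C m phi - oracle C m rho) *m v) <=
  4%:R * \sum_i (Dq phi rho (enum_val i))%:R * `|v i 0| ^+ 2.
Proof.
rewrite /nrm2.
pose g (psi : perm2n n) (i : 'I_(qdim n m)) : 'I_(qdim n m) :=
  enum_rank (oracle_map psi (enum_val i)).
have gK psi : involutive (g psi)
  by move=> i; rewrite /g enum_rankK oracle_mapK enum_valK.
have step : forall i, `|((oracle C m phi - oracle C m rho) *m v) i 0| ^+ 2 <=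
   2%:R * ((Dq phi rho (enum_val (g phi i)))%:R * `|v (g phi i) 0| ^+ 2) +
   2%:R * ((Dq phi rho (enum_val (g rho i)))%:R * `|v (g rho i) 0| ^+ 2).
  move=> i; rewrite mulmxBl.
  rewrite mxBE.
  rewrite !oracleE -/(g phi i) -/(g rho i).
  rewrite /g !enum_rankK !Dq_map -/(g phi i) -/(g rho i).
  case: (boolP (Dq phi rho (enum_val i))) => hD.
    rewrite !mul1r; apply: le_trans (pt_ineq1 _ _) _.
    by rewrite normrN.
  by rewrite /g (Dq_eq hD) subrr normr0 expr0n /= !mul0r !mulr0 addr0.
apply: le_trans (ler_sum _ (fun i _ => step i)) _.
rewrite big_split /= -!mulr_sumr.
have E psi : \sum_(i : 'I_(qdim n m)) (Dq phi rho (enum_val (g psi (g psi i))))%:R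
      * `|v (g psi (g psi i)) 0| ^+ 2 =
    \sum_(i : 'I_(qdim n m)) (Dq phi rho (enum_val i))%:R * `|v i 0| ^+ 2.
  by apply: eq_bigr => i _; rewrite gK.
rewrite [X in _ * X + _](reindex_inj (can_inj (gK phi))).
rewrite [X in _ + _ * X](reindex_inj (can_inj (gK rho))) /= !E.
by rewrite -mulrDl -natrD.
Qed.

Lemma succ_bound n m (U : nat -> 'M[C]_(qdim n m)) out T (phi rho : perm2n n) :
  (forall k, (k <= T)%N -> U k \is unitarymx) ->
  success_prob U out T phi <=
  2%:R * (\sum_i (is_zero_pair phi (out (enum_val i)))%:R * `|run U rho T i 0| ^+ 2)
  + (8 * T)%:R * \sum_(t < T) \sum_i (Dq phi rho (enum_val i))%:R * `|run U rho t i 0| ^+ 2.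
Proof.
move=> hU.
have hd := hybrid phi rho hU (leqnn T).
rewrite /success_prob.
apply: le_trans (_ : \sum_(i | is_zero_pair phi (out (enum_val i)))
   (2%:R * `|run U rho T i 0| ^+ 2 + 2%:R * `|(run U phi T - run U rho T) i 0| ^+ 2) <= _).
  apply: ler_sum => i _; apply: le_trans (pt_ineq1 _ _).
  by rewrite mxBE addrC subrK.
rewrite big_split /= -!mulr_sumr; apply: lerD.
  by rewrite big_mkcond /=; apply: ler_wpM2l => //; apply: ler_sum => i _; case: ifP => _;
     rewrite ?mul1r ?mul0r.
apply: le_trans (_ : 2%:R * nrm2 (run U phi T - run U rho T) <= _).
  apply: ler_wpM2l => //; rewrite /nrm2 [X in _ <= X](bigID (fun i => is_zero_pair phi (out (enum_val i)))) /=.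
  by rewrite lerDl sumr_ge0 // => i _; rewrite exprn_ge0.
apply: le_trans (ler_wpM2l (ler0n _ 2) hd) _.
rewrite mulrA -natrM; apply: le_trans (_ : (2 * T)%:R * \sum_(t < T) (4%:R *
   \sum_i (Dq phi rho (enum_val i))%:R * `|run U rho t i 0| ^+ 2) <= _).
  by apply: ler_wpM2l => //; apply: ler_sum => t _; apply: nrm2_diff.
by rewrite -mulr_sumr mulrA -natrM mulnAC.
Qed.
End LA.

Local Close Scope ring_scope.
Local Close Scope sesquilinear_scope.

Section Pad.
Variable n : nat.

Definition unpad (a : bits (n + n)) : bits n := [tuple tnth a (lshift n i) | i < n].

Lemma unpadK (x : bits n) : unpad (pad0 x) = x.
Proof.
apply: eq_from_tnth => i; rewrite tnth_mktuple (tnth_nth false) /= nth_cat size_tuple.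
by rewrite ltn_ord -tnth_nth.
Qed.

Lemma pad0_inj : injective (@pad0 n).
Proof. by move=> x y e; rewrite -(unpadK x) e unpadK. Qed.

Definition padded (a : bits (n + n)) := a == pad0 (unpad a).

Lemma padded_pad0 x : padded (pad0 x).
Proof. by rewrite /padded unpadK. Qed.

Lemma paddedE a : padded a -> a = pad0 (unpad a).
Proof. by move/eqP. Qed.

Lemma zp_padded (phi : perm2n n) x y : is_zero_pair phi (x, y) -> padded (phi (pad0 x)).
Proof. by rewrite /is_zero_pair /= => /eqP ->; apply: padded_pad0. Qed.

Lemma padded_zp (phi : perm2n n) x : padded (phi (pad0 x)) ->
  is_zero_pair phi (x, unpad (phi (pad0 x))).
Proof. by rewrite /is_zero_pair /=. Qed.

Lemma P0_nopad (rho : perm2n n) x : rho \in perms_K n 0 -> ~~ padded (rho (pad0 x)).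
Proof.
rewrite inE cards_eq0 => /eqP h; apply/negP => /padded_zp hz.
have : (x, unpad (rho (pad0 x))) \in zero_pairs rho by rewrite inE.
by rewrite h inE.
Qed.

End Pad.

Definition mkperm (T : finType) (f : T -> T) : {perm T} :=
  if injectiveP f is ReflectT H then perm H else 1%g.

Lemma mkpermE (T : finType) (f : T -> T) : injective f -> mkperm f =1 f.
Proof.
move=> hf x; rewrite /mkperm; case: injectiveP => [H|[]//]; by rewrite permE.
Qed.

Section Tau.
Variables n K : nat.
Implicit Types (p : {ffun 'I_K -> bits n}) (w : {ffun 'I_K -> bits (n + n)}).

Definition tauf (p : {ffun 'I_K -> bits n}) (w : {ffun 'I_K -> bits (n + n)}) (a : bits (n + n)) : bits (n + n) :=
  if [pick i | pad0 (p i) == a] is Some i then w i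
  else if [pick i | w i == a] is Some i then pad0 (p i) else a.

Definition good (p : {ffun 'I_K -> bits n}) (w : {ffun 'I_K -> bits (n + n)}) :=
  [/\ injective p, injective w & forall i, ~~ padded (w i)].

Lemma tauf_p p w i : good p w -> tauf p w (pad0 (p i)) = w i.
Proof.
case=> hp hw _; rewrite /tauf; case: pickP => [j /eqP /pad0_inj /hp -> //|].
by move/(_ i); rewrite eqxx.
Qed.

Lemma tauf_w p w i : good p w -> tauf p w (w i) = pad0 (p i).
Proof.
case=> hp hw hn; rewrite /tauf; case: pickP => [j /eqP e|_].
  by have := hn i; rewrite -e padded_pad0.
case: pickP => [j /eqP /hw -> //|]; by move/(_ i); rewrite eqxx.
Qed.

Lemma tauf_id p w a : (forall i, pad0 (p i) != a) -> (forall i, w i != a) ->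
  tauf p w a = a.
Proof.
move=> h1 h2; rewrite /tauf; case: pickP => [j hj|_]; first by have := h1 j; rewrite hj.
by case: pickP => [j hj|_] //; have := h2 j; rewrite hj.
Qed.

Lemma tauf_cases p w a : tauf p w a != a ->
  (exists i, a = pad0 (p i)) \/ (exists i, a = w i).
Proof.
rewrite /tauf; case: pickP => [j /eqP <- _|_]; first by left; exists j.
case: pickP => [j /eqP <- _|_]; first by right; exists j.
by rewrite eqxx.
Qed.

Lemma tauf_invol p w : good p w -> involutive (tauf p w).
Proof.
move=> g a.
case: (boolP (tauf p w a == a)) => [/eqP e|]; first by rewrite !e.
case/tauf_cases => [[i ->]|[i ->]].
  by rewrite (tauf_p _ g) (tauf_w _ g).
by rewrite (tauf_w _ g) (tauf_p _ g).
Qed.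

Definition tau p w : perm2n n := mkperm (tauf p w).

Lemma tauE p w : good p w -> tau p w =1 tauf p w.
Proof. by move=> g; apply: mkpermE; apply: can_inj (tauf_invol g). Qed.

Lemma tau_invol p w : good p w -> (tau p w * tau p w = 1)%g.
Proof.
move=> g; apply/permP => a; rewrite permM perm1 !tauE //; exact: tauf_invol.
Qed.

Lemma tauV p w : good p w -> ((tau p w)^-1 = tau p w)%g.
Proof. by move=> g; rewrite -[LHS]mulg1 -(tau_invol g) mulgA mulVg mul1g. Qed.

End Tau.
Section L0.
Variables (T : finType) (K : nat).
Definition Inj := [set p : {ffun 'I_K -> T} | injectiveb p].

Definition hsw (x x' : T) (p : {ffun 'I_K -> T}) : {ffun 'I_K -> T} :=
  [ffun j => tperm x x' (p j)].

Lemma hswK x x' : involutive (hsw x x').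
Proof. by move=> p; apply/ffunP => j; rewrite !ffunE tpermK. Qed.

Lemma f_le x x' : #|[set p in Inj | x \in codom p]| <= #|[set p in Inj | x' \in codom p]|.
Proof.
rewrite -(card_imset _ (can_inj (hswK x x'))); apply: subset_leq_card.
apply/subsetP => _ /imsetP [p + ->]; rewrite !inE => /andP [hi hx].
apply/andP; split.
  apply/injectiveP => i j; rewrite !ffunE => /perm_inj; exact: (injectiveP _ hi).
case/codomP: hx => j ->; apply/codomP; exists j; by rewrite ffunE tpermL.
Qed.

Lemma f_sum : \sum_x #|[set p in Inj | x \in codom p]| = (K * #|Inj|)%N.
Proof.
have E x : #|[set p in Inj | x \in codom p]| = \sum_(p in Inj) (x \in codom p).
  rewrite -sum1_card (eq_bigl (fun p => (p \in Inj) && (x \in codom p))); last first.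
    by move=> p; rewrite inE.
  rewrite big_mkcondr /=; apply: eq_bigr => p _; by case: (x \in codom p).
under eq_bigr => x _ do rewrite E.
rewrite exchange_big /= -sum1_card big_distrr /= muln1; apply: eq_bigr => p hp.
have hi : injective p by apply/injectiveP; rewrite inE in hp.
rewrite -[in RHS](card_ord K) -(card_codom hi).
by rewrite -sum1_card [in RHS]big_mkcond /=; apply: eq_bigr => x _; case: (x \in codom p).
Qed.

Lemma L0 x : (#|T| * #|[set p in Inj | x \in codom p]| = K * #|Inj|)%N.
Proof.
rewrite -f_sum -sum_nat_const; apply: eq_bigr => x' _.
by apply/eqP; rewrite eqn_leq !f_le.
Qed.
End L0.

Section Rho.
Variables (n K : nat).
Implicit Types (p q : {ffun 'I_K -> bits n}) (rho phi : perm2n n).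

Definition wq rho q : {ffun 'I_K -> bits (n + n)} := [ffun i => (rho^-1)%g (pad0 (q i))].
Definition Phi rho p q : perm2n n := (tau p (wq rho q) * rho)%g.

Lemma good_wq rho p q : rho \in perms_K n 0 -> p \in Inj _ K -> q \in Inj _ K ->
  good p (wq rho q).
Proof.
move=> hr; rewrite !inE => /injectiveP hp /injectiveP hq; split => //.
  by move=> i j; rewrite !ffunE => /perm_inj /pad0_inj /hq.
move=> i; apply/negP => /paddedE e.
have := P0_nopad (unpad (wq rho q i)) hr; rewrite -e ffunE permKV.
by rewrite padded_pad0.
Qed.

Section Fixed.
Variables (rho : perm2n n) (p q : {ffun 'I_K -> bits n}).
Hypotheses (hr : rho \in perms_K n 0) (hp : p \in Inj _ K) (hq : q \in Inj _ K).
Let g := good_wq hr hp hq.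

Lemma Phi_pad j : Phi rho p q (pad0 (p j)) = pad0 (q j).
Proof. by rewrite permM tauE // tauf_p // ffunE permKV. Qed.

Lemma tau_other x : x \notin codom p -> tau p (wq rho q) (pad0 x) = pad0 x.
Proof.
move=> hx; rewrite tauE // tauf_id //.
  move=> i; apply/negP => /eqP /pad0_inj e; case/negP: hx; by rewrite -e; apply/codomP; exists i.
move=> i; apply/negP => /eqP e; case: g => _ _ /(_ i); by rewrite e padded_pad0.
Qed.

Lemma Phi_other x : x \notin codom p -> Phi rho p q (pad0 x) = rho (pad0 x).
Proof. by move=> hx; rewrite permM tau_other. Qed.

Lemma zp_Phi x y : is_zero_pair (Phi rho p q) (x, y) = ((x, y) \in [set (p j, q j) | j : 'I_K]).
Proof.
case: (boolP (x \in codom p)) => [/codomP [j ->]|hx].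
  rewrite /is_zero_pair /= Phi_pad; apply/eqP/imsetP => [/pad0_inj <-|[i _ [e ->]]].
    by exists j.
  move: hp; rewrite inE => /injectiveP hp'; by rewrite (hp' _ _ e).
rewrite /is_zero_pair /= Phi_other //; apply/idP/imsetP => [/eqP e|[i _ [ex _]]].
  by have := P0_nopad x hr; rewrite e padded_pad0.
by case/negP: hx; rewrite ex; apply/codomP; exists i.
Qed.

Lemma Phi_PK : Phi rho p q \in perms_K n K.
Proof.
rewrite inE; apply/eqP.
have -> : zero_pairs (Phi rho p q) = [set (p j, q j) | j : 'I_K].
  by apply/setP => [[x y]]; rewrite inE zp_Phi.
rewrite card_imset ?card_ord //.
move: hp; rewrite inE => /injectiveP hp' i j [e _]; exact: hp' e.
Qed.

Lemma zp_tau x y : is_zero_pair (Phi rho p q) (x, y) ->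
  tau p (wq rho q) (pad0 x) != pad0 x.
Proof.
move=> hz; apply/negP => /eqP e; move/zp_padded: hz; rewrite permM e.
by rewrite (negbTE (P0_nopad x hr)).
Qed.


Lemma Dq_tau m (s : basis n m) : Dq (Phi rho p q) rho s ->
  let b := (if s.1.1.1 then (rho^-1)%g s.1.1.2 else s.1.1.2) in
  tau p (wq rho q) b != b.
Proof.
case: s => [[[[] a] bb] w] /=; apply: contra => /eqP e.
  by rewrite /Phi invMg permM (tauV g) e.
by rewrite /Phi permM e.
Qed.

End Fixed.

Lemma L1 rho (hr : rho \in perms_K n 0) b :
  (#|{: bits n}| * #|[set pq in setX (Inj _ K) (Inj _ K) | tau pq.1 (wq rho pq.2) b != b]|
    <= K * (#|Inj (bits n) K| * #|Inj (bits n) K|))%N.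
Proof.
case: (boolP (padded b)) => hb.
  set x := unpad b.
  have S : [set pq in setX (Inj _ K) (Inj _ K) | tau pq.1 (wq rho pq.2) b != b] \subset
           setX [set p in Inj _ K | x \in codom p] (Inj _ K).
    apply/subsetP => [[p' q']].
    rewrite !inE /= => /andP [/andP [hp hq] ht]; rewrite hp hq andbT /=.
    have hp1 : p' \in Inj _ K by rewrite inE.
    have hq1 : q' \in Inj _ K by rewrite inE.
    apply/negPn/negP => hx; move: ht; rewrite (paddedE hb) -/x.
    by rewrite (tau_other hr hp1 hq1 hx) eqxx.
  apply: leq_trans (leq_mul (leqnn _) (subset_leq_card S)) _.
  by rewrite cardsX mulnA L0 mulnA.
have S : [set pq in setX (Inj _ K) (Inj _ K) | tau pq.1 (wq rho pq.2) b != b] \subset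
         setX (Inj _ K) [set q in Inj _ K | unpad (rho b) \in codom q].
  apply/subsetP => [[p' q']].
  rewrite !inE /= => /andP [/andP [hp hq] ht]; rewrite hp hq /=.
  have hp1 : p' \in Inj _ K by rewrite inE.
  have hq1 : q' \in Inj _ K by rewrite inE.
  move: ht; rewrite (tauE (good_wq hr hp1 hq1)); case/tauf_cases => [[i e]|[i e]].
    by move: hb; rewrite e padded_pad0.
  by rewrite e ffunE permKV unpadK; apply/codomP; exists i.
apply: leq_trans (leq_mul (leqnn _) (subset_leq_card S)) _.
by rewrite cardsX mulnCA L0 mulnCA.
Qed.

End Rho.

Section Fiber.
Variables (n K : nat) (phi : perm2n n).
Hypothesis hphi : phi \in perms_K n K.

Definition Aset := [set x : bits n | padded (phi (pad0 x))].
Definition Pset := [set a : bits (n + n) | padded a].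
Definition Qset := [set a : bits (n + n) | padded (phi a)].
Definition Wset := [set a : bits (n + n) | ~~ padded a && ~~ padded (phi a)].

Lemma card_A : #|Aset| = K.
Proof.
move: hphi; rewrite inE => /eqP <-.
have -> : Aset = [set xy.1 | xy in zero_pairs phi].
  apply/setP => x; rewrite inE; apply/idP/imsetP => [h|[[x' y] + ->]].
    by exists (x, unpad (phi (pad0 x))) => //; rewrite inE padded_zp.
  by rewrite inE => /zp_padded.
apply: card_in_imset => [[x y] [x' y']]; rewrite !inE /= /is_zero_pair /=.
by move=> /eqP h1 /eqP h2 ex; subst x'; move: h1; rewrite h2 => /pad0_inj ->.
Qed.

Lemma card_P : #|Pset| = (2 ^ n)%N.
Proof.
have -> : Pset = (@pad0 n) @: [set: bits n].
  apply/setP => a; rewrite inE; apply/idP/imsetP => [h|[x _ ->]].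
    by exists (unpad a) => //; apply: paddedE.
  exact: padded_pad0.
by rewrite card_imset ?cardsT ?card_tuple ?card_bool //; apply: pad0_inj.
Qed.

Lemma card_Q : #|Qset| = (2 ^ n)%N.
Proof.
rewrite -card_P -(card_preimset Pset (@perm_inj _ phi)).
by apply: eq_card => a; rewrite !inE.
Qed.

Lemma card_PQ : #|Pset :&: Qset| = K.
Proof.
rewrite -card_A -(card_imset _ (@pad0_inj n)); apply: eq_card => a.
rewrite !inE; apply/andP/imsetP => [[h1 h2]|[x + ->]].
  by exists (unpad a); rewrite ?inE -?(paddedE h1).
by rewrite inE padded_pad0.
Qed.

Lemma card_W : (#|Wset| + 2 * 2 ^ n = 2 ^ (n + n) + K)%N.
Proof.
have hW : Wset = ~: (Pset :|: Qset).
  by apply/setP => a; rewrite !inE negb_or.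
have hT : #|{: bits (n + n)}| = (2 ^ (n + n))%N by rewrite card_tuple card_bool.
rewrite hW -hT -(cardsC (Pset :|: Qset)) -card_PQ.
have := cardsUI Pset Qset; rewrite card_P card_Q => h.
by rewrite mul2n -addnn -h addnA [_ + #|Pset :|: Qset|]addnC.
Qed.


Definition Jset := setX [set f : {ffun 'I_K -> bits n} in ffun_on Aset | injectiveb f]
  [set f : {ffun 'I_K -> bits (n + n)} in ffun_on Wset | injectiveb f].

Definition Fiber := [set i in setX (perms_K n 0) (setX (Inj (bits n) K) (Inj (bits n) K))
  | Phi i.1 i.2.1 i.2.2 == phi].

Definition Fm (i : perm2n n * ({ffun 'I_K -> bits n} * {ffun 'I_K -> bits n})) :=
  (i.2.1, wq i.1 i.2.2).
Definition Gm (j : {ffun 'I_K -> bits n} * {ffun 'I_K -> bits (n + n)}) :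
  perm2n n * ({ffun 'I_K -> bits n} * {ffun 'I_K -> bits n}) :=
  ((tau j.1 j.2 * phi)%g, (j.1, [ffun k => unpad (phi (pad0 (j.1 k)))])).

Lemma card_J : #|Jset| = (K ^_ K * #|Wset| ^_ K)%N.
Proof. by rewrite cardsX !card_inj_ffuns_on card_ord card_A. Qed.

Lemma FG : {in Fiber, forall i, Fm i \in Jset /\ Gm (Fm i) = i}.
Proof.
move=> [rho [p q]]; rewrite !inE /= => /andP [/andP [hr /andP [hp hq]] /eqP e].
have hp1 : p \in Inj _ K by rewrite inE.
have hq1 : q \in Inj _ K by rewrite inE.
have {}hr : rho \in perms_K n 0 by rewrite inE.
have g := good_wq hr hp1 hq1.
split.
  rewrite /Jset /Fm /= hp andbT; case: (g) => _ hwi hn.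
  rewrite (introT (injectiveP _) hwi) andbT; apply/andP; split.
    apply/forallP => j; rewrite inE -e Phi_pad //; exact: padded_pad0.
  apply/forallP => j; rewrite inE hn /= -e permM tauE // tauf_w //.
  exact: P0_nopad.
rewrite /Gm /Fm /= -e /Phi mulgA (tau_invol g) mul1g; congr (_, (_, _)).
by apply/ffunP => j; rewrite ffunE -/(Phi rho p q) Phi_pad // unpadK.
Qed.

Lemma GF : {in Jset, forall j, Gm j \in Fiber /\ Fm (Gm j) = j}.
Proof.
move=> [p w]; rewrite !inE /= => /andP [/andP [/ffun_onP hA hp] /andP [/ffun_onP hW hw]].
have hA' j : padded (phi (pad0 (p j))) by have := hA j; rewrite inE.
have hW' j : ~~ padded (w j) && ~~ padded (phi (w j)) by have := hW j; rewrite inE.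
have g : good p w.
  split; [exact/injectiveP | exact/injectiveP |] => j; by case/andP: (hW' j).
have cover x : padded (phi (pad0 x)) -> x \in codom p.
  move=> hx.
  have S : codom p \subset Aset by apply/subsetP => _ /codomP [j ->]; rewrite inE.
  have Ceq : #|codom p| = #|Aset|.
    have hi : injective p by apply/injectiveP.
    by rewrite card_A (card_codom hi) card_ord.
  have := (subset_cardP Ceq S) => /(_ x); rewrite [x \in Aset]inE hx => ->; done.
set rho := (tau p w * phi)%g.
set q : {ffun 'I_K -> bits n} := [ffun k => unpad (phi (pad0 (p k)))].
have hr : rho \in perms_K n 0.
  rewrite inE cards_eq0; apply/eqP/setP => [[x y]]; rewrite !inE /is_zero_pair /=.
  apply/negP => /eqP hz.
  have : padded (rho (pad0 x)) by rewrite hz padded_pad0.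
  rewrite /rho permM.
  case: (boolP (x \in codom p)) => [/codomP [j ->]|hx].
    by rewrite tauE // tauf_p //; case/andP: (hW' j) => _ /negbTE ->.
  rewrite tauE // tauf_id.
  - by move/cover => hc; case/negP: hx.
  - move=> j; apply/negP => /eqP /pad0_inj ej; case/negP: hx; rewrite -ej.
    by apply/codomP; exists j.
  - move=> j; apply/negP => /eqP ej; case/andP: (hW' j) => + _; by rewrite ej padded_pad0.
have hq : q \in Inj _ K.
  rewrite inE; apply/injectiveP => i j; rewrite !ffunE => e.
  have := paddedE (hA' i); rewrite e -(paddedE (hA' j)) => /perm_inj /pad0_inj.
  by move/injectiveP: hp => hp; apply: hp.
have hp1 : p \in Inj _ K by rewrite inE.
have ew : wq rho q = w.
  apply/ffunP => j; rewrite ffunE /rho invMg permM ffunE -(paddedE (hA' j)) permK.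
  by rewrite (tauV g) tauE // tauf_p.
split; last by rewrite /Fm /Gm /= -/rho -/q ew.
rewrite /Fiber /Gm /= -/rho -/q; apply/andP; split.
  by move: hr hp1 hq; rewrite !inE => -> -> ->.
by rewrite /Phi ew /rho mulgA (tau_invol g) mul1g.
Qed.

Lemma card_Fiber : #|Fiber| = (K ^_ K * #|Wset| ^_ K)%N.
Proof.
rewrite -card_J -(card_in_imset (f := Fm)); last first.
  by move=> i j hi hj e; rewrite -(proj2 (FG hi)) -(proj2 (FG hj)) e.
apply: eq_card => j; apply/imsetP/idP => [[i hi ->]|hj].
  exact: (proj1 (FG hi)).
by exists (Gm j); [exact: (proj1 (GF hj)) | rewrite (proj2 (GF hj))].
Qed.

End Fiber.

Section Final.
Variable C : numClosedFieldType.
Local Open Scope ring_scope.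

Lemma count_bound n K (rho : perm2n n) (hr : rho \in perms_K n 0) b
    (P : pred ({ffun 'I_K -> bits n} * {ffun 'I_K -> bits n})) :
  (forall pq, pq \in setX (Inj (bits n) K) (Inj (bits n) K) -> P pq ->
     tau pq.1 (wq rho pq.2) b != b) ->
  \sum_(pq in setX (Inj (bits n) K) (Inj (bits n) K)) ((P pq)%:R : C) <=
  K%:R / (2 ^ n)%:R * (#|Inj (bits n) K| * #|Inj (bits n) K|)%:R.
Proof.
move=> hP.
set A := setX (Inj (bits n) K) (Inj (bits n) K).
set S := [set pq in A | tau pq.1 (wq rho pq.2) b != b].
have h1 : (\sum_(pq in A) (P pq : nat) <= #|S|)%N.
  rewrite -sum1_card [X in (_ <= X)%N](eq_bigl (fun pq => (pq \in A) && (tau pq.1 (wq rho pq.2) b != b))); last first.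
    by move=> pq; rewrite /S inE.
  rewrite big_mkcondr /=; apply: leq_sum => pq hA.
  by case: (boolP (P pq)) => // /(hP _ hA) ->.
have h2 := @L1 n K rho hr b.
have hN : (2 ^ n)%N = #|{: bits n}| by rewrite card_tuple card_bool.
rewrite -natr_sum mulrAC ler_pdivlMr ?ltr0n ?expn_gt0 // -!natrM ler_nat.
rewrite hN; apply: leq_trans _ h2; rewrite mulnC leq_mul2l; apply/orP; right.
exact: h1.
Qed.

Lemma rho_bound n m K (U : nat -> 'M[C]_(qdim n m)) out T
    (hU : forall k, (k <= T)%N -> U k \is unitarymx)
    (rho : perm2n n) (hr : rho \in perms_K n 0) :
  \sum_(pq in setX (Inj (bits n) K) (Inj (bits n) K))
     success_prob U out T (Phi rho pq.1 pq.2) <=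
  (#|Inj (bits n) K| * #|Inj (bits n) K|)%:R *
    ((2 * K)%:R / (2 ^ n)%:R + (8 * T * T * K)%:R / (2 ^ n)%:R).
Proof.
set A := setX (Inj (bits n) K) (Inj (bits n) K).
set I2 := (#|Inj (bits n) K| * #|Inj (bits n) K|)%:R : C.
apply: le_trans (ler_sum _ (fun pq _ => succ_bound out (Phi rho pq.1 pq.2) rho hU)) _.
rewrite big_split /= -!mulr_sumr.
have hG : \sum_(pq in A) \sum_i (is_zero_pair (Phi rho pq.1 pq.2) (out (enum_val i)))%:R *
     `|run U rho T i 0| ^+ 2 <= K%:R / (2 ^ n)%:R * I2.
  rewrite exchange_big /=.
  apply: le_trans (_ : \sum_i (K%:R / (2 ^ n)%:R * I2) * `|run U rho T i 0| ^+ 2 <= _).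
    apply: ler_sum => i _; rewrite -mulr_suml; apply: ler_wpM2r; first exact: exprn_ge0.
    apply: (@count_bound n K rho hr (pad0 (out (enum_val i)).1) (fun pq => is_zero_pair (Phi rho pq.1 pq.2) (out (enum_val i)))) => pq hA hz.
    move: hA; rewrite inE => /andP [hp hq].
    by move: hz; rewrite [out _]surjective_pairing; apply: (zp_tau hr).
  by rewrite -mulr_sumr -/(nrm2 _) (nrm2_run rho hU) ?mulr1.
have hH : \sum_(pq in A) \sum_(t < T) \sum_i (Dq (Phi rho pq.1 pq.2) rho (enum_val i))%:R *
     `|run U rho t i 0| ^+ 2 <= T%:R * (K%:R / (2 ^ n)%:R * I2).
  rewrite exchange_big /=.
  apply: le_trans (_ : \sum_(t < T) (K%:R / (2 ^ n)%:R * I2) <= _); last first.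
    by rewrite sumr_const card_ord (mulr_natl _ T).
  apply: ler_sum => t _; rewrite exchange_big /=.
  apply: le_trans (_ : \sum_i (K%:R / (2 ^ n)%:R * I2) * `|run U rho t i 0| ^+ 2 <= _).
    apply: ler_sum => i _; rewrite -mulr_suml; apply: ler_wpM2r; first exact: exprn_ge0.
    apply: (@count_bound n K rho hr (let s := enum_val i in if s.1.1.1 then (rho^-1)%g s.1.1.2 else s.1.1.2) (fun pq => Dq (Phi rho pq.1 pq.2) rho (enum_val i))) => pq hA hz.
    move: hA; rewrite inE => /andP [hp hq].
    exact: (Dq_tau hr hp hq hz).
  by rewrite -mulr_sumr -/(nrm2 _) (nrm2_run rho hU) ?mulr1 // ltnW // ltn_ord.
apply: le_trans (lerD (ler_wpM2l (ler0n _ _) hG) (ler_wpM2l (ler0n _ _) hH)) _.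
by rewrite le_eqVlt; apply/orP; left; apply/eqP; rewrite /I2 !natrM; ring.
Qed.


Lemma sp_bounds n m (U : nat -> 'M[C]_(qdim n m)) out T phi :
  (forall k, (k <= T)%N -> U k \is unitarymx) ->
  0 <= success_prob U out T phi <= 1.
Proof.
move=> hU; apply/andP; split; first by apply: sumr_ge0 => i _; rewrite exprn_ge0.
rewrite -(nrm2_run phi hU (leqnn T)) /nrm2 [X in _ <= X](bigID (fun i => is_zero_pair phi (out (enum_val i)))) /=.
by rewrite lerDl sumr_ge0 // => i _; rewrite exprn_ge0.
Qed.

Lemma S1 n K (f : perm2n n -> C) :
  \sum_(i in setX (perms_K n 0) (setX (Inj (bits n) K) (Inj (bits n) K)))
     f (Phi i.1 i.2.1 i.2.2) =
  (K ^_ K * (2 ^ (n + n) + K - 2 * 2 ^ n) ^_ K)%:R * \sum_(phi in perms_K n K) f phi.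
Proof.
rewrite (partition_big (fun i => Phi i.1 i.2.1 i.2.2) (fun phi => phi \in perms_K n K)); last first.
  move=> [rho [p q]]; rewrite !in_setX /= => /andP [hr /andP [hp hq]].
  exact: Phi_PK.
rewrite mulr_sumr; apply: eq_bigr => phi hphi.
rewrite (eq_bigr (fun _ => f phi)); last by move=> i /andP [_ /eqP ->].
rewrite (eq_bigl (fun i => i \in Fiber K phi)); last by move=> i; rewrite /Fiber inE.
rewrite sumr_const (card_Fiber hphi) mulr_natl.
have hW := card_W hphi.
have -> : #|Wset phi| = (2 ^ (n + n) + K - 2 * 2 ^ n)%N by rewrite -hW addnK.
by [].
Qed.

Lemma sum_setX (T1 T2 : finType) (A : {set T1}) (B : {set T2}) (F : T1 * T2 -> C) :
  \sum_(i in setX A B) F i = \sum_(a in A) \sum_(b in B) F (a, b).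
Proof. by rewrite pair_big; apply: eq_big => [[a b]|[a b] _] //=; rewrite in_setX. Qed.

Lemma div_le (s x : C) (k : nat) : 0 <= x -> s <= k%:R * x -> s / k%:R <= x.
Proof.
move=> hx hs; case: (posnP k) => [->|kp]; first by rewrite invr0 mulr0.
by rewrite ler_pdivrMr ?ltr0n // mulrC.
Qed.

End Final.

Unset Implicit Arguments.
Local Open Scope ring_scope.

Theorem lemma4 (C : numClosedFieldType) (n K T m : nat)
  (U : nat -> 'M[C]_(qdim n m)) (out : basis n m -> bits n * bits n) (eps : C) :
  (1 <= K)%N -> (K <= 2 ^ n)%N ->
  (forall k, (k <= T)%N -> U k \is unitarymx) ->
  eps = avg_success U out T K -> 0 < eps ->
  eps <= (8 * T.+1 ^ 2 * K)%:R / (2 ^ n)%:R.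
Proof.
move=> hK1 hKN hU -> hpos.
rewrite /avg_success.
have spb phi := sp_bounds out phi hU.
have hB0 : (0 : C) <= (8 * T.+1 ^ 2 * K)%:R / (2 ^ n)%:R by rewrite divr_ge0.
case: (posnP n) => [n0|npos].
  apply: le_trans (_ : 1 <= _); last first.
    by rewrite n0 expn0 divr1 ler1n !muln_gt0 hK1.
  apply: div_le => //; rewrite mulr1 -sum1_card natr_sum; apply: ler_sum => phi _.
  by case/andP: (spb phi).
apply: le_trans (_ : (2 * K)%:R / (2 ^ n)%:R + (8 * T * T * K)%:R / (2 ^ n)%:R <= _);
  last first.
  rewrite -mulrDl -natrD; apply: ler_wpM2r; first by rewrite invr_ge0.
  rewrite ler_nat; nia.
apply: div_le; first by rewrite addr_ge0 // divr_ge0.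
set B := (2 * K)%:R / (2 ^ n)%:R + (8 * T * T * K)%:R / (2 ^ n)%:R.
set c0 := (K ^_ K * (2 ^ (n + n) + K - 2 * 2 ^ n) ^_ K)%N.
have c0pos : (0 < c0)%N.
  rewrite muln_gt0 !ffact_gt0 leqnn /= expnD.
  have h2 : (2 <= 2 ^ n)%N by rewrite -{1}(expn1 2) leq_pexp2l.
  nia.
set I := setX (perms_K n 0) (setX (Inj (bits n) K) (Inj (bits n) K)).
have E := S1 K (fun phi => success_prob U out T phi).
have E0 := S1 K (fun _ : perm2n n => (1 : C)).
rewrite !sumr_const in E0.
have LI : \sum_(i in I) success_prob U out T (Phi i.1 i.2.1 i.2.2) <= #|I|%:R * B.
  rewrite sum_setX /=.
  apply: le_trans (ler_sum _ (fun rho hr => @rho_bound C n m K U out T hU rho hr)) _.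
  rewrite sumr_const -[_ *+ #|perms_K n 0|]mulr_natl le_eqVlt; apply/orP; left; apply/eqP.
  by rewrite /I /B !cardsX !natrM; ring.
have c0p : (0 : C) < c0%:R by rewrite ltr0n.
rewrite -(ler_pM2l c0p) -E; apply: le_trans LI _.
by rewrite E0 mulrA.
Qed.
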